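(* Let a project have finite state space $\mathbb{X}$, transition probabilities $p(i,j)$, active rewards $R(i)$, discount factor $0<\beta\le1$ and horizon $T$. For a tuple $A=(A_1,\dots,A_T)$ of subsets of $\mathbb{X}$ and $1\le d\le T$, $i\in\mathbb{X}$, let $f_d^A(i)$ be the expected total discounted reward $\mathsf{E}_i[\sum_{t=0}^{\tau-1}\beta^tR(X(t))]$ earned starting in state $i$ with $d$ remaining periods under the stopping rule $\tau$ that, at time $t<d$ (when $d-t$ periods remain) engages the project iff $X(t)\in A_{d-t}$, and stops at the first time this fails or when $t=d$; and let $r_d^A(i)=f_d^{A\cup\{(d,i)\}}(i)$, where $A\cup\{(s,j)\}$ denotes the tuple obtained from $A$ by replacing $A_s$ with $A_s\cup\{j\}$. Let $A$ satisfy $A_1\subseteq A_2\subseteq\dots\subseteq A_T\subseteq\mathbb{X}$. Then for $1\le d\le T$ and $i\in\mathbb{X}$: (a) $r_d^A(i)=R(i)+\beta\sum_{j\in A_{d-1}}p(i,j)r_{d-1}^A(j)$ if $2\le d\le T$, and $r_1^A(i)=R(i)$. (b) $r_d^{A\cup\{(d,i^* )\}}(i)=r_d^A(i)$ for $i^*\in\mathbb{X}\setminus A_d$. (c) $r_d^{A\cup\{(d-1,i^* )\}}(i)=r_d^A(i)+\beta p(i,i^* )r_{d-1}^A(i^* )$ for $i^*\in A_d\setminus A_{d-1}$ (with $d\ge 2$). (d) $r_d^{A\cup\{(s,i^* )\}}(i)=R(i)+\beta\sum_{j\in A_{d-1}}p(i,j)r_{d-1}^{A\cup\{(s,i^* )\}}(j)$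 for $1\le s\le d-2$ and $i^*\in A_{s+1}\setminus A_s$.
   Context: $r_d^A(i)$ is the modified reward measure: the reward measure of the stopping rule with continuation sets $A$, modified so that the project is engaged at least at time 0 in state $i$ with $d$ periods remaining. *)

(* Defs.v *)
From HB Require Import structures.
From mathcomp Require Import all_boot all_order all_algebra.
Set Implicit Arguments. Unset Strict Implicit. Unset Printing Implicit Defensive.
Import Order.TTheory GRing.Theory Num.Theory.
Local Open Scope ring_scope.

Section Project.
Variables (R : realFieldType) (X : finType).
Variables (p : X -> X -> R) (rew : X -> R) (beta : R).

(* A tuple of continuation sets (A_1, ..., A_T) is a map nat -> {set X};
   only the indices 1..T are ever consulted. *)
Definition tupleA := nat -> {set X}.

Definition updA (A : tupleA) (s : nat) (j : X) : tupleA :=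
  fun k => if k == s then A k :|: [set j] else A k.

Definition traj (d : nat) := {ffun 'I_d.+1 -> X}.

Definition traj_prob (d : nat) (x : traj d) : R :=
  \prod_(t < d) p (x (inord t)) (x (inord t.+1)).

Definition stop_time (A : tupleA) (d : nat) (x : traj d) : nat :=
  find (fun t => x (inord t) \notin A (d - t)%N) (iota 0 d).

Definition disc_reward (A : tupleA) (d : nat) (x : traj d) : R :=
  \sum_(t < d | (t < stop_time A x)%N) beta ^+ t * rew (x (inord t)).

Definition fval (A : tupleA) (d : nat) (i : X) : R :=
  \sum_(x : traj d | x ord0 == i) traj_prob x * disc_reward A x.

Definition rval (A : tupleA) (d : nat) (i : X) : R :=
  fval (updA A d i) d i.

End Project.

(* Main.v *)
Require Import Defs.
From mathcomp Require Import all_boot all_order all_algebra.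
From mathcomp Require Import ring zify.
Import Order.TTheory GRing.Theory Num.Theory.
Local Open Scope ring_scope.

Module Helpers.
Set Implicit Arguments. Unset Strict Implicit.

Section H.
Variables (R : realFieldType) (X : finType).
Variables (p : X -> X -> R) (rew : X -> R) (beta : R).

Definition tcons d (j : X) (y : traj X d) : traj X d.+1 :=
  [ffun k : 'I_d.+2 => if val k is k'.+1 then y (inord k') else j].
Definition ttail d (x : traj X d.+1) : traj X d :=
  [ffun k : 'I_d.+1 => x (inord k.+1)].

Lemma tcons0 d j (y : traj X d) : tcons j y ord0 = j.
Proof. by rewrite ffunE. Qed.

Lemma tcons_in0 d j (y : traj X d) : tcons j y (inord 0) = j.
Proof. by rewrite ffunE /= inordK. Qed.

Lemma tconsS d j (y : traj X d) t : (t <= d)%N -> tcons j y (inord t.+1) = y (inord t).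
Proof. move=> ht; rewrite ffunE. rewrite /= inordK // ltnS. Qed.

Lemma tcons_bij d : bijective (fun u : X * traj X d => tcons u.1 u.2).
Proof.
exists (fun x : traj X d.+1 => (x ord0, ttail x)).
  case=> j y /=; rewrite tcons0; congr pair; apply/ffunP.
  case=> k hk; rewrite !ffunE /= inordK ?ltnS //; apply: congr1; apply: val_inj; rewrite /= inordK //.
move=> x; apply/ffunP=> k; rewrite ffunE /=.
case: k => [[|k] hk] /=.
  by congr (x _); apply: val_inj.
rewrite ffunE inordK //; congr (x _); apply: val_inj; rewrite /= inordK //.
Qed.

Lemma sum_cons d i (G : traj X d.+1 -> R) :
  \sum_(x : traj X d.+1 | x ord0 == i) G x = \sum_(y : traj X d) G (tcons i y).
Proof.
rewrite (reindex (fun u : X * traj X d => tcons u.1 u.2)); last first.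
  exact: onW_bij (tcons_bij d).
rewrite (eq_bigl (fun u => (u.1 == i) && true)); last by move=> u; rewrite tcons0 andbT.
rewrite -(pair_big_dep (fun j => j == i) (fun _ _ => true) (fun j y => G (tcons j y))) /=.
by rewrite big_pred1_eq.
Qed.

Lemma sum_traj0 i (G : traj X 0 -> R) :
  \sum_(x : traj X 0 | x ord0 == i) G x = G [ffun=> i].
Proof.
rewrite (big_pred1 [ffun=> i]) // => x /=.
apply/eqP/eqP => [<-|->]; last by rewrite ffunE.
by apply/ffunP=> k; rewrite ffunE (ord1 k).
Qed.

Lemma prob_cons d j (y : traj X d) : traj_prob p (tcons j y) = p j (y ord0) * traj_prob p y.
Proof.
rewrite /traj_prob big_ord_recl tcons_in0 tconsS // ; congr (_ * _).
  by congr (p _ (y _)); apply: val_inj; rewrite /= inordK.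
apply: eq_bigr => -[t ht] _. rewrite /= /bump /= add1n tconsS ?tconsS // ltnW //.
Qed.

Lemma stop_cons (A : tupleA X) d i (y : traj X d) :
  stop_time A (tcons i y) = if i \in A d.+1 then (stop_time A y).+1 else 0%N.
Proof.
rewrite /stop_time /= tcons_in0 subn0.
case: (i \in A d.+1) => //=.
congr S; rewrite -(addn0 1%N) iotaDl find_map.
apply: eq_in_find => t; rewrite mem_iota add0n /= => ht.
by rewrite add1n tconsS ?subSS // ltnW.
Qed.

Lemma disc_cons (A : tupleA X) d i (y : traj X d) :
  disc_reward rew beta A (tcons i y) =
  if i \in A d.+1 then rew i + beta * disc_reward rew beta A y else 0.
Proof.
rewrite /disc_reward stop_cons; case: ifP => _; last first.
  by rewrite big1 // => t; rewrite ltn0.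
rewrite big_mkcond big_ord_recl /= expr0 mul1r tcons_in0; congr (_ + _).
rewrite [in RHS]big_mkcond mulr_sumr; apply: eq_bigr => -[t ht] _ /=.
rewrite /bump /= add1n ltnS; case: ifP => _; last by rewrite mulr0.
by rewrite exprS -mulrA tconsS // ltnW.
Qed.

Lemma split_first d (g : X -> R) (F : traj X d -> R) :
  \sum_(y : traj X d) g (y ord0) * F y = \sum_j g j * \sum_(y : traj X d | y ord0 == j) F y.
Proof.
rewrite (partition_big (fun y : traj X d => y ord0) predT) //=.
apply: eq_bigr => j _; rewrite mulr_sumr; apply: eq_bigr => y /eqP <-.
by [].
Qed.

Hypothesis hp1 : forall i, \sum_(j : X) p i j = 1.

Lemma tot d i : \sum_(y : traj X d | y ord0 == i) traj_prob p y = 1.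
Proof.
elim: d i => [|d IH] i.
  by rewrite sum_traj0 /traj_prob big_ord0.
rewrite sum_cons; under eq_bigr do rewrite prob_cons.
rewrite split_first; under eq_bigr do rewrite IH mulr1.
exact: hp1.
Qed.

Lemma fval_rec (A : tupleA X) d i :
  fval p rew beta A d.+1 i =
  if i \in A d.+1 then rew i + beta * \sum_j p i j * fval p rew beta A d j else 0.
Proof.
rewrite /fval sum_cons; under eq_bigr do rewrite prob_cons disc_cons.
case: ifP => _; last by rewrite big1 // => y _; rewrite mulr0.
under eq_bigr do rewrite mulrDr.
rewrite big_split /= -mulr_suml.
have E : \sum_(y : traj X d) p i (y ord0) * traj_prob p y = 1.
  rewrite split_first -[RHS](hp1 i); apply: eq_bigr => j _; by rewrite tot mulr1.
rewrite E mul1r; congr (_ + _).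
under eq_bigr do rewrite mulrCA -mulrA.
rewrite -mulr_sumr split_first; congr (_ * _).
Qed.

Lemma fval0 (A : tupleA X) i : fval p rew beta A 0 i = 0.
Proof. by rewrite /fval big1 // => y _; rewrite /disc_reward big_ord0 mulr0. Qed.

Lemma fval_ext (A B : tupleA X) d i :
  (forall k, (1 <= k <= d)%N -> A k = B k) -> fval p rew beta A d i = fval p rew beta B d i.
Proof.
elim: d i => [|d IH] i hAB; first by rewrite !fval0.
rewrite !fval_rec (hAB d.+1) ?leqnn //; case: ifP => // _.
congr (_ + _ * _); apply: eq_bigr => j _; congr (_ * _); apply: IH => k /andP[h1 h2].
by apply: hAB; rewrite h1 (leq_trans h2).
Qed.

Lemma L1 (A : tupleA X) d i : (1 <= d)%N ->
  rval p rew beta A d i = rew i + beta * \sum_j p i j * fval p rew beta A d.-1 j.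
Proof.
case: d => // d _; rewrite /rval fval_rec /updA eqxx in_setU set11 orbT /=.
congr (_ + _ * _); apply: eq_bigr => j _; congr (_ * _); apply: fval_ext => k /andP[_ hk].
by rewrite ifN // neq_ltn ltnS hk.
Qed.

Lemma L2 (A : tupleA X) d j : (1 <= d)%N ->
  fval p rew beta A d j = if j \in A d then rval p rew beta A d j else 0.
Proof.
case: d => // d _; rewrite fval_rec L1 //.
Qed.

Lemma La (A : tupleA X) d i : (2 <= d)%N ->
  rval p rew beta A d i = rew i + beta * \sum_(j in A d.-1) p i j * rval p rew beta A d.-1 j.
Proof.
move=> hd; rewrite L1 ?(leq_trans _ hd) //; congr (_ + _ * _).
rewrite [RHS]big_mkcond; apply: eq_bigr => j _; rewrite L2; last by case: d hd => [|[]].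
by case: ifP => _; rewrite ?mulr0.
Qed.

Lemma Lb (A B : tupleA X) d i : (1 <= d)%N -> (forall k, (1 <= k < d)%N -> B k = A k) ->
  rval p rew beta B d i = rval p rew beta A d i.
Proof.
move=> hd hAB; rewrite !L1 //; congr (_ + _ * _); apply: eq_bigr => j _; congr (_ * _).
apply: fval_ext => k /andP[h1 h2]; apply: hAB; rewrite h1 /=.
by case: d hd h2.
Qed.

End H.
End Helpers.
Import Helpers.

Theorem lemma1 (R : realFieldType) (X : finType)
  (p : X -> X -> R) (rew : X -> R) (beta : R) (T : nat) (A : tupleA X)
  (hp0 : forall i j, 0 <= p i j)
  (hp1 : forall i, \sum_(j : X) p i j = 1)
  (hbeta : 0 < beta <= 1)
  (hmono : forall k, (1 <= k < T)%N -> A k \subset A k.+1) :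
  forall (d : nat) (i : X), (1 <= d <= T)%N ->
  (* (a) *)
  ((2 <= d)%N ->
     rval p rew beta A d i =
     rew i + beta * \sum_(j in A d.-1) p i j * rval p rew beta A d.-1 j) /\
  rval p rew beta A 1 i = rew i /\
  (* (b) *)
  (forall istar, istar \notin A d ->
     rval p rew beta (updA A d istar) d i = rval p rew beta A d i) /\
  (* (c) *)
  (forall istar, (2 <= d)%N -> istar \in A d :\: A d.-1 ->
     rval p rew beta (updA A d.-1 istar) d i =
     rval p rew beta A d i + beta * p i istar * rval p rew beta A d.-1 istar) /\
  (* (d) *)
  (forall s istar, (1 <= s <= d - 2)%N -> istar \in A s.+1 :\: A s ->
     rval p rew beta (updA A s istar) d i =
     rew i + beta * \sum_(j in A d.-1) p i j *
                      rval p rew beta (updA A s istar) d.-1 j).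
Proof.
move=> d i /andP[hd1 hdT]; split; first exact: La.
split.
  rewrite L1 //= (eq_bigr (fun _ => 0)); last by move=> j _; rewrite fval0 mulr0.
  by rewrite big1 // mulr0 addr0.
split.
  move=> istar _; apply: Lb => // k /andP[_ hk].
  by rewrite /updA ifN // neq_ltn hk.
split.
  move=> istar hd2; rewrite inE => /andP[hnot _].
  have hd1' : (1 <= d.-1)%N by move: hd2; case: (d) => [|[]].
  rewrite L1 // [rval _ _ _ A d i]La //.
  rewrite (eq_bigr (fun j => if j \in istar |: A d.-1 then p i j * rval p rew beta A d.-1 j else 0)); last first.
    move=> j _; rewrite L2 // /updA eqxx setUC; case: ifP => _; last by rewrite mulr0.
    congr (_ * _); apply: Lb => // k /andP[_ hk]; by rewrite ifN // neq_ltn hk.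
  rewrite -big_mkcond big_setU1 //=.
  ring.
move=> s istar /andP[hs1 hs2] _.
have hd3 : (3 <= d)%N by lia.
rewrite La; last by lia.
congr (_ + _ * _); apply: eq_bigl => j.
rewrite /updA ifN // neq_ltn; apply/orP; right.
  lia.
exact: hp1.
Qed.
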